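(* Let $B_0=\langle a,e,f\mid e^2=e,\ f^2=f,\ ef=fe=0,\ ea=af=a\rangle=\{0,a,e,f\}$. Then (i) the pseudovariety $\llbracket B_0\rrbracket$ is strictly join irreducible; (ii) $\llbracket B_0\rrbracket$ is not join irreducible; (iii) $\llbracket B_0^I\rrbracket$ is not strictly join irreducible.
   Context: $B_0$ is the four-element semigroup with zero $0$ given by the presentation (all products not determined by the relations are $0$). $B_0^I$ is $B_0$ with an external identity adjoined. A pseudovariety is a class of finite semigroups closed under finite direct products, subsemigroups and homomorphic images; $\llbracket S\rrbracket$ is the pseudovariety generated by $S$. In the lattice of pseudovarieties, $\mathbf{V}$ is join irreducible if $\mathbf{V}\subseteq\bigvee\mathscr{X}$ implies $\mathbf{V}\subseteq\mathbf{X}$ for some $\mathbf{X}\in\mathscr{X}$, and strictly join irreducible if $\mathbf{V}=\bigvee\mathscr{X}$ implies $\mathbf{V}\in\mathscr{X}$ (for every set $\mathscr{X}$ of pseudovarieties). *)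

(* Defs.v *)
From HB Require Import structures.
From mathcomp Require Import all_boot.

Set Implicit Arguments.
Unset Strict Implicit.
Unset Printing Implicit Defensive.

Record fsemigroup := FSemigroup {
  carrier :> finType;
  sop : carrier -> carrier -> carrier;
  sopA : associative sop;
  snonempty : 0 < #|carrier|
}.

Definition is_hom (S T : fsemigroup) (h : S -> T) : Prop :=
  forall x y : S, h (sop x y) = sop (h x) (h y).

Section Prod.
Variables S T : fsemigroup.
Definition prod_op (x y : S * T) : S * T := (sop x.1 y.1, sop x.2 y.2).
Lemma prod_opA : associative prod_op.
Proof. by move=> [? ?] [? ?] [? ?]; rewrite /prod_op /= !sopA. Qed.
Lemma prod_nonempty : 0 < #|{: S * T}|.
Proof. by rewrite card_prod muln_gt0 !snonempty. Qed.
Definition prod_sg : fsemigroup := FSemigroup prod_opA prod_nonempty.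
End Prod.

Definition triv_op (x y : unit) : unit := tt.
Lemma triv_opA : associative triv_op. Proof. by []. Qed.
Lemma triv_nonempty : 0 < #|{: unit}|. Proof. by rewrite card_unit. Qed.
Definition triv_sg : fsemigroup := FSemigroup triv_opA triv_nonempty.

(** S^I : S with an external identity adjoined (None is the new identity) *)
Section AdjI.
Variable S : fsemigroup.
Definition adjI_op (x y : option S) : option S :=
  match x, y with
  | None, _ => y
  | _, None => x
  | Some a, Some b => Some (sop a b)
  end.
Lemma adjI_opA : associative adjI_op.
Proof. by move=> [a|] [b|] [c|] //=; rewrite sopA. Qed.
Lemma adjI_nonempty : 0 < #|{: option S}|.
Proof. by rewrite card_option. Qed.
Definition adjI : fsemigroup := FSemigroup adjI_opA adjI_nonempty.
End AdjI.

Definition sgclass := fsemigroup -> Prop.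

Definition subclass (V W : sgclass) : Prop := forall S, V S -> W S.
Definition eqclass (V W : sgclass) : Prop := forall S, V S <-> W S.

(* Closed under finite direct products (the empty product being the trivial
   semigroup), subsemigroups (= domains of injective homomorphisms into a
   member, i.e. subsemigroups up to isomorphism) and homomorphic images. *)
Definition pseudovariety (V : sgclass) : Prop :=
  [/\ V triv_sg,
      (forall S T, V S -> V T -> V (prod_sg S T)),
      (forall (S T : fsemigroup) (h : S -> T),
          is_hom h -> injective h -> V T -> V S)
    & (forall (S T : fsemigroup) (h : S -> T),
          is_hom h -> (forall y : T, exists x : S, h x = y) -> V S -> V T)].

Definition gen (S : fsemigroup) : sgclass :=
  fun T => forall V, pseudovariety V -> V S -> V T.

Definition join (X : sgclass -> Prop) : sgclass :=
  fun T => forall V, pseudovariety V ->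
             (forall W, X W -> subclass W V) -> V T.

Definition join_irreducible (V : sgclass) : Prop :=
  forall X : sgclass -> Prop, (forall W, X W -> pseudovariety W) ->
    subclass V (join X) -> exists W, X W /\ subclass V W.

Definition strictly_join_irreducible (V : sgclass) : Prop :=
  forall X : sgclass -> Prop, (forall W, X W -> pseudovariety W) ->
    eqclass V (join X) -> exists W, X W /\ eqclass V W.

Inductive B0elt := B0z | B0a | B0e | B0f.

Definition B0_to (x : B0elt) : 'I_4 :=
  match x with B0z => inord 0 | B0a => inord 1 | B0e => inord 2 | B0f => inord 3 end.
Definition B0_of (i : 'I_4) : B0elt :=
  match val i with 0 => B0z | 1 => B0a | 2 => B0e | _ => B0f end.
Lemma B0_toK : cancel B0_to B0_of.
Proof. by case; rewrite /B0_of /= inordK. Qed.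

HB.instance Definition _ := Finite.copy B0elt (can_type B0_toK).

(* products not determined by the relations are 0 *)
Definition B0_op (x y : B0elt) : B0elt :=
  match x, y with
  | B0e, B0e => B0e
  | B0f, B0f => B0f
  | B0e, B0a => B0a
  | B0a, B0f => B0a
  | _, _ => B0z
  end.
Lemma B0_opA : associative B0_op.
Proof. by case; case; case. Qed.
Lemma B0_nonempty : 0 < #|{: B0elt}|.
Proof. by apply/card_gt0P; exists B0z. Qed.
Definition B0 : fsemigroup := FSemigroup B0_opA B0_nonempty.

(* Main.v *)
Require Import Defs.
From mathcomp Require Import all_boot.
From Stdlib Require Import Classical.
From Stdlib Require List.
Set Implicit Arguments. Unset Strict Implicit. Unset Printing Implicit Defensive.

Local Notation "x • y" := (sop x y) (at level 40, left associativity).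

Section Sub.
Variables (S : fsemigroup) (P : pred S).
Hypothesis PM : forall x y, P x -> P y -> P (x • y).
Variable x0 : S.
Hypothesis Px0 : P x0.
Definition subT : finType := {x : S | P x}.
Definition sub_op (u v : subT) : subT := exist _ (val u • val v) (PM (valP u) (valP v)).
Lemma sub_opA : associative sub_op.
Proof. by move=> u v w; apply: val_inj => /=; exact: sopA. Qed.
Lemma sub_nonempty : 0 < #|{: subT}|.
Proof. by apply/card_gt0P; exists (exist _ x0 Px0). Qed.
Definition sub_sg : fsemigroup := FSemigroup sub_opA sub_nonempty.
Lemma sub_val_hom : is_hom (val : sub_sg -> S).
Proof. by []. Qed.
Lemma sub_val_inj : injective (val : sub_sg -> S).
Proof. exact: val_inj. Qed.
End Sub.

Inductive term := Var of nat | Mul of term & term.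
Fixpoint eval (S : fsemigroup) (s : nat -> S) (t : term) : S :=
  match t with Var n => s n | Mul a b => eval s a • eval s b end.
Definition holds (S : fsemigroup) (e : term * term) :=
  forall s : nat -> S, eval s e.1 = eval s e.2.
Definition idclass (l : seq (term * term)) : sgclass :=
  fun S => forall e, List.In e l -> holds S e.

Lemma eval_hom (S T : fsemigroup) (h : S -> T) : is_hom h ->
  forall s t, h (eval s t) = eval (h \o s) t.
Proof. by move=> hh s; elim=> //= a IHa b IHb; rewrite hh IHa IHb. Qed.

Lemma eval_prod (S T : fsemigroup) (s : nat -> prod_sg S T) t :
  eval s t = (eval (fst \o s) t, eval (snd \o s) t).
Proof. by elim: t => /= [n|a IHa b IHb]; [case: (s n)| rewrite IHa IHb]. Qed.

Lemma eval_ext (S : fsemigroup) (s s' : nat -> S) t :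
  (forall n, s n = s' n) -> eval s t = eval s' t.
Proof. by move=> H; elim: t => /= [n|a IHa b IHb]; rewrite ?H ?IHa ?IHb. Qed.

Lemma idclass_pv l : pseudovariety (idclass l).
Proof.
split.
- move=> e _ s; by case: (eval s e.1); case: (eval s e.2).
- move=> S T HS HT e He s; rewrite !eval_prod.
  by rewrite (HS e He (fst \o s)) (HT e He (snd \o s)).
- move=> S T h hh hi HT e He s; apply: hi; rewrite !eval_hom //; exact: HT.
- move=> S T h hh hs HS e He s.
  have ex : forall n, exists x : S, h x == s n.
    by move=> n; case: (hs (s n)) => x <-; exists x.
  pose s' n := xchoose (ex n).
  have E : forall n, s n = (h \o s') n.
    by move=> n; rewrite /= /s'; apply/esym/eqP; exact: (xchooseP (ex n)).
  rewrite !(eval_ext _ E) -!eval_hom //; congr h; exact: HS.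
Qed.

Lemma gen_pv S : pseudovariety (gen S).
Proof.
split.
- by move=> V [] *.
- by move=> A B HA HB V PV HV; have [_ Hp _ _] := PV; apply: Hp; [exact: HA|exact: HB].
- by move=> A B h hh hi HB V PV HV; have [_ _ Hs _] := PV; apply: Hs hh hi _; exact: HB.
- by move=> A B h hh hs HA V PV HV; have [_ _ _ Hq] := PV; apply: Hq hh hs _; exact: HA.
Qed.

Lemma gen_self S : gen S S. Proof. by move=> V _. Qed.

Lemma gen_idclass S l : idclass l S -> forall T, gen S T -> idclass l T.
Proof. by move=> H T HT; apply: HT => //; exact: idclass_pv. Qed.


Definition tx := Var 0. Definition ty := Var 1. Definition tz := Var 2. Definition tq := Var 3.
Definition tE := Mul tx tx. Definition tF := Mul tz tz.
Definition prodl (t : term) (l : seq term) := foldl Mul t l.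
Definition id1 := (Mul tE tx, tE).
Definition id2 := (Mul tE tF, Mul tF tE).
Definition id3 := (prodl tE [:: ty; tE; tF; tq; tF], prodl tF [:: tq; tF; tE; ty; tE]).
Definition idM := (prodl tE [:: ty; tF], prodl tE [:: tF; ty; tE; tF]).
Definition lB0 := [:: id1; id2; id3].

Definition val4 (S : Type) (a b c d : S) : nat -> S :=
  fun n => match n with 0 => a | 1 => b | 2 => c | _ => d end.

Lemma B0_lB0 : idclass lB0 B0.
Proof.
move=> e /= [<-|[<-|[<-|[]]]] s /=;
by case: (s 0); case: (s 1); case: (s 2); case: (s 3).
Qed.

Lemma B0_not_idM : ~ holds B0 idM.
Proof. by move/(_ (val4 B0e B0a B0f B0z)). Qed.

Section Facts.
Variable S : fsemigroup.
Hypothesis PS : idclass lB0 S.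
Lemma fEE (x : S) : (x • x) • (x • x) = x • x.
Proof.
have /= H := PS (or_introl erefl) (val4 x x x x).
by rewrite sopA H H.
Qed.
Lemma fEFc (x z : S) : (x • x) • (z • z) = (z • z) • (x • x).
Proof. exact: (PS (or_intror (or_introl erefl)) (val4 x x z z)). Qed.
Lemma fI1 (x z p q : S) : let E := x • x in let F := z • z in
  E • p • E • F • q • F = F • q • F • E • p • E.
Proof. exact: (PS (or_intror (or_intror (or_introl erefl))) (val4 x p z q)). Qed.
End Facts.

Section Key.
Variable S : fsemigroup.
Variables E F y : S.
Hypothesis EE : E • E = E.
Hypothesis FF : F • F = F.
Hypothesis EFc : E • F = F • E.
Hypothesis I1 : forall p q, E • p • E • F • q • F = F • q • F • E • p • E.
Hypothesis Hne : E • y • F <> E • F • y • E • F.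
Let A := E • y • F.

Lemma wEE w : w • E • E = w • E. Proof. by rewrite -sopA EE. Qed.
Lemma wFF w : w • F • F = w • F. Proof. by rewrite -sopA FF. Qed.
Lemma wFE w : w • F • E = w • E • F. Proof. by rewrite -sopA -EFc sopA. Qed.

Lemma A_EAF : E • A • F = A.
Proof. rewrite /A !sopA EE wFF. done. Qed.

Lemma notJ_EF p q : p • (E • F) • q <> A.
Proof.
move=> H.
have H2 : A = F • q • F • E • p • E.
  by rewrite -I1 -A_EAF -H !sopA.
have H3 : A = E • F • q • F • E • p • E • F.
  by rewrite -{1}A_EAF {1}H2 !sopA.
have H4 : E • F • A • E • F = A.
  by rewrite [RHS]H3 {1}H3 !sopA !(wFE, wEE, wFF, EE, FF).
by apply: Hne; rewrite -[LHS]/A -{1}H4 /A !sopA !(wFE, wEE, wFF, EE, FF).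
Qed.

Definition inJ (w : S) := ~~ [exists p, exists q, p • w • q == A].
Lemma inJ_intro w : (forall p q, p • w • q <> A) -> inJ w.
Proof. by move=> H; apply/existsPn => p; apply/existsPn => q; apply/eqP; exact: H. Qed.
Lemma inJ_elim w : inJ w -> forall p q, p • w • q <> A.
Proof. by move=> /existsPn H p q; move: (H p) => /existsPn /(_ q) /eqP. Qed.
Lemma inJ_l u w : inJ w -> inJ (u • w).
Proof. move=> H; apply: inJ_intro => p q; rewrite sopA; exact: (inJ_elim H). Qed.
Lemma inJ_r u w : inJ w -> inJ (w • u).
Proof.
move=> H; apply: inJ_intro => p q.
have -> : p • (w • u) • q = p • w • (u • q) by rewrite !sopA.
exact: (inJ_elim H).
Qed.
Lemma inJ_EF : inJ (E • F). Proof. apply: inJ_intro; exact: notJ_EF. Qed.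
Lemma inJ_FE : inJ (F • E). Proof. rewrite -EFc; exact: inJ_EF. Qed.
Lemma inJ_AE : inJ (A • E).
Proof.
apply: inJ_intro => p q; have -> : p • (A • E) • q = (p • E • y) • (E • F) • q.
  by rewrite /A !sopA wFE.
exact: notJ_EF.
Qed.
Lemma inJ_FA : inJ (F • A).
Proof.
apply: inJ_intro => p q; have -> : p • (F • A) • q = p • (E • F) • (y • F • q).
  by rewrite /A !sopA wFE.
exact: notJ_EF.
Qed.
Lemma inJ_AA : inJ (A • A).
Proof.
apply: inJ_intro => p q; have -> : p • (A • A) • q = (p • E • y) • (E • F) • (y • F • q).
  by rewrite /A !sopA wFE.
exact: notJ_EF.
Qed.
Lemma notinJ_A : ~~ inJ A.
Proof. by apply/negPn/existsP; exists E; apply/existsP; exists F; rewrite A_EAF. Qed.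
Lemma notinJ_E : ~~ inJ E.
Proof. by apply/negPn/existsP; exists E; apply/existsP; exists (y • F); rewrite EE /A sopA. Qed.
Lemma notinJ_F : ~~ inJ F.
Proof. by apply/negPn/existsP; exists (E • y); apply/existsP; exists F; rewrite wFF. Qed.
Lemma inJ_neq w a : inJ w -> ~~ inJ a -> (w == a) = false.
Proof. by move=> H1 H2; apply/eqP => Ew; move: H2; rewrite -Ew H1. Qed.
Lemma EneF : (E == F) = false.
Proof. by apply/eqP => Ef; move: inJ_EF; rewrite -Ef EE (negbTE notinJ_E). Qed.
Lemma EneA : (E == A) = false.
Proof. by apply/eqP => Ea; move: inJ_AE; rewrite -Ea EE (negbTE notinJ_E). Qed.
Lemma FneA : (F == A) = false.
Proof. by apply/eqP => Fa; move: inJ_FA; rewrite -Fa FF (negbTE notinJ_F). Qed.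

Definition PU (w : S) := [|| w == E, w == F, w == A | inJ w].
Definition fU (w : S) : B0 :=
  if w == E then B0e else if w == F then B0f else if w == A then B0a else B0z.
Lemma fUJ w : inJ w -> fU w = B0z.
Proof.
move=> H; rewrite /fU (inJ_neq H notinJ_E) (inJ_neq H notinJ_F) (inJ_neq H notinJ_A) //.
Qed.
Lemma fUE : fU E = B0e. Proof. by rewrite /fU eqxx. Qed.
Lemma fUF : fU F = B0f. Proof. by rewrite /fU eq_sym EneF eqxx. Qed.
Lemma fUA : fU A = B0a. Proof. by rewrite /fU eq_sym EneA eq_sym FneA eqxx. Qed.

Lemma AF : A • F = A. Proof. by rewrite /A wFF. Qed.
Lemma EA : E • A = A. Proof. by rewrite /A !sopA EE. Qed.

Lemma PU_cases w : PU w -> [\/ w = E, w = F, w = A | inJ w].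
Proof. by case/or4P => [/eqP|/eqP|/eqP|]; [constructor 1|constructor 2|constructor 3|constructor 4]. Qed.

Lemma PU_mul u v : PU u -> PU v -> PU (u • v) /\ fU (u • v) = sop (fU u) (fU v).
Proof.
have PJ w : inJ w -> PU w /\ fU w = B0z.
  by move=> H; rewrite (fUJ H) /PU H !orbT.
have Zr (a : B0) : sop a B0z = B0z by case: a.
move=> /PU_cases [->|->|->|Hu] /PU_cases [->|->|->|Hv];
  rewrite ?fUE ?fUF ?fUA ?(fUJ Hu) ?(fUJ Hv) ?Zr /=;
  try (by apply: PJ; first [exact: inJ_EF | exact: inJ_FE | exact: inJ_AE |
        exact: inJ_FA | exact: inJ_AA | exact: inJ_l | exact: inJ_r]).
- by rewrite EE fUE /PU eqxx.
- by rewrite EA fUA /PU eqxx !orbT.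
- by rewrite FF fUF /PU eqxx orbT.
- by rewrite AF fUA /PU eqxx !orbT.
Qed.

Lemma PU_closed u v : PU u -> PU v -> PU (u • v).
Proof. by move=> Hu Hv; case: (PU_mul Hu Hv). Qed.
Lemma PU_E : PU E. Proof. by rewrite /PU eqxx. Qed.

Definition Usg := sub_sg PU_closed PU_E.
Definition phiU (u : Usg) : B0 := fU (val u).
Lemma phiU_hom : is_hom phiU.
Proof. by move=> u v; rewrite /phiU /=; case: (PU_mul (valP u) (valP v)). Qed.
Lemma phiU_surj : forall b : B0, exists u : Usg, phiU u = b.
Proof.
have PJ w : inJ w -> PU w by move=> H; rewrite /PU H !orbT.
have PJ_A : PU A by rewrite /PU eqxx !orbT.
have PJ_F : PU F by rewrite /PU eqxx !orbT.
case.
- by exists (exist (fun x => is_true (PU x)) _ (PJ _ inJ_EF)); rewrite /phiU /= fUJ //; exact: inJ_EF.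
- by exists (exist (fun x => is_true (PU x)) A (PJ_A)); rewrite /phiU /= fUA.
- by exists (exist (fun x => is_true (PU x)) E PU_E); rewrite /phiU /= fUE.
- by exists (exist (fun x => is_true (PU x)) F PJ_F); rewrite /phiU /= fUF.
Qed.

Lemma key_div V : pseudovariety V -> V S -> V B0.
Proof.
case=> _ _ Hs Hq VS.
apply: (Hq _ _ _ phiU_hom phiU_surj).
exact: (Hs _ _ _ (@sub_val_hom S PU PU_closed E PU_E) (@sub_val_inj S PU PU_closed E PU_E) VS).
Qed.
End Key.

Lemma part1 : strictly_join_irreducible (gen B0).
Proof.
move=> X HX Heq.
apply: NNPP => Hno.
have HW : forall W, X W -> ~ W B0.
  move=> W XW WB0; apply: Hno; exists W; split=> // T; split.
  - by move=> gT; exact: gT W (HX W XW) WB0.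
  - by move=> WT; apply/Heq => V PV HV; exact: HV W XW T WT.
pose M := idclass (idM :: lB0).
have PM : pseudovariety M := idclass_pv _.
have HWM : forall W, X W -> subclass W M.
  move=> W XW T WT.
  have gT : gen B0 T by apply/Heq => V PV HV; exact: HV W XW T WT.
  have PT : idclass lB0 T := gen_idclass B0_lB0 gT.
  move=> e [<-|He]; last exact: PT.
  apply: NNPP => Hn.
  have [s Hs] : exists s, eval s idM.1 <> eval s idM.2 := not_all_ex_not _ _ Hn.
  apply: (HW W XW).
  apply: (key_div (E := s 0 • s 0) (F := s 2 • s 2) (y := s 1)) => //.
  - exact: fEE.
  - exact: fEE.
  - exact: fEFc.
  - by move=> p q; exact: (fI1 PT (s 0) (s 2) p q).
  - exact: HX.
have : M B0.
  exact: (proj1 (Heq B0) (@gen_self B0) M PM HWM).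
by move/(_ idM (or_introl erefl)); exact: B0_not_idM.
Qed.


Definition B0I := adjI B0.
Definition P1 (w : B0I) : bool := if w is Some B0f then false else true.
Definition P2 (w : B0I) : bool := if w is Some B0e then false else true.
Lemma P1_closed (x y : B0I) : P1 x -> P1 y -> P1 (x • y).
Proof. by case: x => [[]|]; case: y => [[]|] => //. Qed.
Lemma P2_closed (x y : B0I) : P2 x -> P2 y -> P2 (x • y).
Proof. by case: x => [[]|]; case: y => [[]|] => //. Qed.
Lemma P1_None : P1 None. Proof. by []. Qed.
Lemma P2_None : P2 None. Proof. by []. Qed.
Definition S1 := sub_sg P1_closed P1_None.
Definition S2 := sub_sg P2_closed P2_None.

Definition idl1 := (Mul (Mul tx ty) tx, Mul (Mul ty tx) tx).
Definition idl2 := (Mul (Mul tx ty) tx, Mul (Mul tx tx) ty).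

Lemma S1_idl1 : idclass [:: idl1] S1.
Proof.
move=> e [<-|[]] s; apply: val_inj; rewrite !(eval_hom (@sub_val_hom _ _ P1_closed _ P1_None)) /=.
by case: (s 0) => a Ha; case: (s 1) => b Hb /=; move: Ha Hb; case: a => [[]|]; case: b => [[]|] => //.
Qed.
Lemma S2_idl2 : idclass [:: idl2] S2.
Proof.
move=> e [<-|[]] s; apply: val_inj; rewrite !(eval_hom (@sub_val_hom _ _ P2_closed _ P2_None)) /=.
by case: (s 0) => a Ha; case: (s 1) => b Hb /=; move: Ha Hb; case: a => [[]|]; case: b => [[]|] => //.
Qed.
Lemma B0_not_idl1 : ~ idclass [:: idl1] B0.
Proof. by move/(_ idl1 (or_introl erefl) (val4 B0f B0a B0z B0z)). Qed.
Lemma B0_not_idl2 : ~ idclass [:: idl2] B0.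
Proof. by move/(_ idl2 (or_introl erefl) (val4 B0e B0a B0z B0z)). Qed.

Definition PUv (a b : B0I) : bool :=
  match a, b with
  | Some B0z, Some B0z | Some B0z, Some B0a | Some B0a, Some B0z | Some B0a, Some B0a
  | Some B0e, Some B0f | Some B0e, None | None, Some B0f | None, None => true
  | _, _ => false
  end.
Definition phiv (a b : B0I) : B0I :=
  match a, b with
  | None, None => None
  | Some B0e, None => Some B0e
  | None, Some B0f => Some B0f
  | Some B0a, Some B0a => Some B0a
  | _, _ => Some B0z
  end.
Lemma coreU (a b c d : B0I) : PUv a b -> PUv c d ->
  PUv (a • c) (b • d) /\ phiv (a • c) (b • d) = phiv a b • phiv c d.
Proof.
by case: a => [[]|]; case: b => [[]|] //; case: c => [[]|]; case: d => [[]|] => //.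
Qed.

Definition P12 := prod_sg S1 S2.
Definition PUw (w : P12) : bool := PUv (val w.1) (val w.2).
Lemma PUw_closed (u v : P12) : PUw u -> PUw v -> PUw (u • v).
Proof. by move=> Hu Hv; case: (coreU Hu Hv). Qed.
Definition one1 : S1 := exist (fun x => is_true (P1 x)) None P1_None.
Definition one2 : S2 := exist (fun x => is_true (P2 x)) None P2_None.
Lemma PUw_one : PUw (one1, one2). Proof. by []. Qed.
Definition Usg2 := sub_sg PUw_closed PUw_one.
Definition phiw (u : Usg2) : B0I := phiv (val (val u).1) (val (val u).2).
Lemma phiw_hom : is_hom phiw.
Proof.
move=> u v; rewrite /phiw /=.
by case: (coreU (valP u) (valP v)).
Qed.
Definition mk1 (a : B0I) (H : P1 a) : S1 := exist (fun x => is_true (P1 x)) a H.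
Definition mk2 (a : B0I) (H : P2 a) : S2 := exist (fun x => is_true (P2 x)) a H.
Definition mkU (w : P12) (H : PUw w) : Usg2 := exist (fun x => is_true (PUw x)) w H.
Lemma phiw_surj : forall b : B0I, exists u : Usg2, phiw u = b.
Proof.
case=> [[]|].
- by exists (@mkU (@mk1 (Some B0z) erefl, @mk2 (Some B0z) erefl) erefl).
- by exists (@mkU (@mk1 (Some B0a) erefl, @mk2 (Some B0a) erefl) erefl).
- by exists (@mkU (@mk1 (Some B0e) erefl, @mk2 None erefl) erefl).
- by exists (@mkU (@mk1 None erefl, @mk2 (Some B0f) erefl) erefl).
- by exists (@mkU (@mk1 None erefl, @mk2 None erefl) erefl).
Qed.

Lemma V_B0I V : pseudovariety V -> V S1 -> V S2 -> V B0I.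
Proof.
move=> PV H1 H2; have [_ Hp Hs Hq] := PV.
apply: (Hq _ _ _ phiw_hom phiw_surj).
apply: (Hs _ _ _ (@sub_val_hom _ _ PUw_closed _ PUw_one) (@sub_val_inj _ _ PUw_closed _ PUw_one)).
exact: Hp.
Qed.

Lemma Some_hom : is_hom (fun x : B0 => (Some x : B0I)). Proof. by []. Qed.
Lemma Some_inj' : injective (fun x : B0 => (Some x : B0I)). Proof. by move=> x y []. Qed.

Definition X12 : sgclass -> Prop := fun W => W = gen S1 \/ W = gen S2.

Lemma X12_pv W : X12 W -> pseudovariety W.
Proof. by case=> ->; exact: gen_pv. Qed.

Lemma join_X12_B0I : join X12 B0I.
Proof.
move=> V PV HV; apply: V_B0I => //.
- exact: (HV _ (or_introl erefl) S1 (@gen_self S1)).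
- exact: (HV _ (or_intror erefl) S2 (@gen_self S2)).
Qed.

Lemma notgen1 : ~ gen S1 B0.
Proof. by move=> H; apply: B0_not_idl1; exact: (gen_idclass S1_idl1 H). Qed.
Lemma notgen2 : ~ gen S2 B0.
Proof. by move=> H; apply: B0_not_idl2; exact: (gen_idclass S2_idl2 H). Qed.

Lemma X12_noB0 W : X12 W -> ~ W B0.
Proof. by case=> ->; [exact: notgen1 | exact: notgen2]. Qed.

Lemma part2 : ~ join_irreducible (gen B0).
Proof.
move=> H.
have [W [XW HW]] : exists W, X12 W /\ subclass (gen B0) W.
  apply: H; first exact: X12_pv.
  move=> T gT V PV HV; apply: gT => //.
  have [_ _ Hs _] := PV.
  exact: (Hs _ _ _ Some_hom Some_inj' (join_X12_B0I PV HV)).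
exact: (X12_noB0 XW (HW B0 (@gen_self B0))).
Qed.

Lemma part3 : ~ strictly_join_irreducible (gen B0I).
Proof.
move=> H.
have [W [XW HW]] : exists W, X12 W /\ eqclass (gen B0I) W.
  apply: H; first exact: X12_pv.
  move=> T; split.
  - by move=> gT V PV HV; apply: gT => //; exact: join_X12_B0I.
  - move=> JT; apply: JT; first exact: gen_pv.
    move=> W' [->|->] T' gT' V PV HV; apply: gT' => //; have [_ _ Hs _] := PV.
    + exact: (Hs _ _ _ (@sub_val_hom _ _ P1_closed _ P1_None) (@sub_val_inj _ _ P1_closed _ P1_None) HV).
    + exact: (Hs _ _ _ (@sub_val_hom _ _ P2_closed _ P2_None) (@sub_val_inj _ _ P2_closed _ P2_None) HV).
apply: (X12_noB0 XW).
have WB0I : W B0I by apply/HW; exact: gen_self.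
have [_ _ Hs _] := X12_pv XW.
exact: (Hs _ _ _ Some_hom Some_inj' WB0I).
Qed.

Theorem proposition3p1 :
  strictly_join_irreducible (gen B0) /\
  ~ join_irreducible (gen B0) /\
  ~ strictly_join_irreducible (gen (adjI B0)).
Proof. by split; [exact: part1 | split; [exact: part2 | exact: part3]]. Qed.
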